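(* Let $P=\{(x,y)\in\mathbb{R}^{p+q}: Ax+Gy\le b\}$ be a rational polyhedron and let $\alpha x+\beta y\le\gamma$ (with $\alpha\in\mathbb{Q}^p$, $\beta\in\mathbb{Q}^q$ row vectors, $\gamma\in\mathbb{Q}$) be a cutting plane for $P$, i.e. an inequality that is valid for $P_I$ but not valid for $P$. Then there is a natural number $k\ge 2$ such that $\alpha x+\beta y\le\gamma$ is a $k$-disjunctive cut for $P$.
   Context: Notation: $A\in\mathbb{Q}^{m\times p}$, $G\in\mathbb{Q}^{m\times q}$, $b\in\mathbb{Q}^m$; $P_I=\mathrm{conv}\{(x,y)\in P: x\in\mathbb{Z}^p\}$ is the mixed integer hull. A $k$-disjunction ($k\ge 2$) is a family of $k$ inequalities $d^1x\le\delta^1,\dots,d^kx\le\delta^k$ with $d^i\in\mathbb{Z}^p$ (row vectors, not necessarily distinct) and $\delta^i\in\mathbb{Z}$ such that every $x\in\mathbb{Z}^p$ satisfies $d^ix\le\delta^i$ for at least one $i$. For a closed convex set $C\subseteq\mathbb{R}^{p+q}$, an inequality $\alpha x+\beta y\le\gamma$ is a $k$-disjunctive cut for $C$ if it is not valid for $C$ and there is a $k$-disjunction such that every $(x,y)\in C$ with $\alpha x+\beta y>\gamma$ satisfies $d^ix>\delta^i$ for all $i=1,\dots,k$. *)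

(* Defs.v *)
From Stdlib Require Import Reals QArith Qreals ZArith List.
Open Scope R_scope.

(* A vector of R^n is represented by a function nat -> R; only the
   coordinates 0..n-1 matter. *)
Definition vec := nat -> R.

Fixpoint dot (n : nat) (a x : vec) : R :=
  match n with
  | O => 0
  | S n' => dot n' a x + a n' * x n'
  end.

Definition point := (vec * vec)%type.
Definition pset := point -> Prop.

Definition polyhedron (m p q : nat) (A G : nat -> nat -> Q) (b : nat -> Q) : pset :=
  fun z => forall i, (i < m)%nat ->
    dot p (fun j => Q2R (A i j)) (fst z) + dot q (fun j => Q2R (G i j)) (snd z)
      <= Q2R (b i).

Definition int_vec (p : nat) (x : vec) : Prop :=
  forall j, (j < p)%nat -> exists z : Z, x j = IZR z.

Definition wsum_w (l : list (R * point)) : R :=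
  fold_right (fun tz acc => fst tz + acc) 0 l.
Definition wsum_x (l : list (R * point)) (j : nat) : R :=
  fold_right (fun tz acc => fst tz * fst (snd tz) j + acc) 0 l.
Definition wsum_y (l : list (R * point)) (j : nat) : R :=
  fold_right (fun tz acc => fst tz * snd (snd tz) j + acc) 0 l.

Definition conv (p q : nat) (S : pset) : pset :=
  fun z => exists l : list (R * point),
    Forall (fun tz => 0 <= fst tz /\ S (snd tz)) l /\
    wsum_w l = 1 /\
    (forall j, (j < p)%nat -> fst z j = wsum_x l j) /\
    (forall j, (j < q)%nat -> snd z j = wsum_y l j).

Definition mixed_int_hull (p q : nat) (P : pset) : pset :=
  conv p q (fun z => P z /\ int_vec p (fst z)).

Definition valid (p q : nat) (alpha beta : nat -> Q) (gamma : Q) (C : pset) : Prop :=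
  forall z, C z ->
    dot p (fun j => Q2R (alpha j)) (fst z) + dot q (fun j => Q2R (beta j)) (snd z)
      <= Q2R gamma.

Definition k_disjunction (p k : nat) (d : nat -> nat -> Z) (delta : nat -> Z) : Prop :=
  (2 <= k)%nat /\
  forall x : vec, int_vec p x ->
    exists i, (i < k)%nat /\ dot p (fun j => IZR (d i j)) x <= IZR (delta i).

Definition k_disjunctive_cut (p q k : nat) (alpha beta : nat -> Q) (gamma : Q)
    (C : pset) : Prop :=
  ~ valid p q alpha beta gamma C /\
  exists (d : nat -> nat -> Z) (delta : nat -> Z),
    k_disjunction p k d delta /\
    forall z, C z ->
      dot p (fun j => Q2R (alpha j)) (fst z) + dot q (fun j => Q2R (beta j)) (snd z)
        > Q2R gamma ->
      forall i, (i < k)%nat -> dot p (fun j => IZR (d i j)) (fst z) > IZR (delta i).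

(* Main.v *)
Require Import Defs.
From Stdlib Require Import Reals QArith Qreals ZArith List Lra Lia Classical.
Open Scope R_scope.

Lemma dot_lin n (a b : R) f g x :
  dot n (fun j => a * f j + b * g j) x = a * dot n f x + b * dot n g x.
Proof. induction n; simpl; [ring|rewrite IHn; ring]. Qed.

Lemma dot_ext n f g x : (forall j, (j < n)%nat -> f j = g j) -> dot n f x = dot n g x.
Proof. induction n; simpl; intros H; [reflexivity|]. rewrite IHn by (intros; apply H; lia).
  rewrite (H n) by lia. reflexivity. Qed.

Lemma dot_opp n f x : dot n (fun j => - f j) x = - dot n f x.
Proof. induction n; simpl; [ring|rewrite IHn; ring]. Qed.

Lemma dot_scal n (a : R) f x : dot n (fun j => a * f j) x = a * dot n f x.
Proof. induction n; simpl; [ring|rewrite IHn; ring]. Qed.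

Lemma dot_zero n f x : (forall j, (j < n)%nat -> f j = 0) -> dot n f x = 0.
Proof. induction n; simpl; intros H; [reflexivity|]. rewrite IHn by (intros; apply H; lia).
  rewrite (H n) by lia. ring. Qed.

Definition upd (y : vec) (j : nat) (t : R) : vec := fun i => if Nat.eqb i j then t else y i.

Lemma dot_upd n g y j t : (j < n)%nat -> dot n g (upd y j t) = dot n g y + g j * (t - y j).
Proof. induction n; intros H; [lia|]. simpl. unfold upd at 2.
  destruct (Nat.eqb n j) eqn:E.
  - apply Nat.eqb_eq in E; subst.
    assert (dot j g (upd y j t) = dot j g y).
    { clear. assert (forall k, (k <= j)%nat -> dot k g (upd y j t) = dot k g y); [|apply H; lia].
      induction k; intros; simpl; [reflexivity|]. rewrite IHk by lia. unfold upd.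
      destruct (Nat.eqb k j) eqn:E; [apply Nat.eqb_eq in E; lia|reflexivity]. }
    rewrite H0. ring.
  - apply Nat.eqb_neq in E. rewrite IHn by lia. ring. Qed.

Definition Rsat (s : bool) (v w : R) : Prop := if s then v < w else v <= w.

Lemma Rsat_lt s v w : v < w -> Rsat s v w.
Proof. destruct s; simpl; lra. Qed.

Definition pickU (c d : R * bool) : R * bool :=
  let (u, s) := c in let (v, s') := d in
  if Rlt_dec u v then c else if Rlt_dec v u then d else if s then c else d.
Definition pickL (c d : R * bool) : R * bool :=
  let (u, s) := c in let (v, s') := d in
  if Rlt_dec v u then c else if Rlt_dec u v then d else if s then c else d.

Fixpoint bestU (l : list (R * bool)) : option (R * bool) :=
  match l with nil => None | c :: l' =>
    match bestU l' with None => Some c | Some d => Some (pickU c d) end end.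
Fixpoint bestL (l : list (R * bool)) : option (R * bool) :=
  match l with nil => None | c :: l' =>
    match bestL l' with None => Some c | Some d => Some (pickL c d) end end.

Lemma bestU_spec l : match bestU l with
  | None => l = nil
  | Some b => In b l /\ forall t, Rsat (snd b) t (fst b) -> forall c, In c l -> Rsat (snd c) t (fst c) end.
Proof. induction l as [|c l IH]; simpl; [reflexivity|].
  destruct (bestU l) as [d|].
  - destruct IH as [Hin Hd]. split.
    + destruct c as [u s], d as [v s']; unfold pickU.
      destruct (Rlt_dec u v); [left; auto|]. destruct (Rlt_dec v u); [right; auto|].
      destruct s; [left|right]; auto.
    + intros t Ht c0 [<-|Hc0].
      * destruct c as [u s], d as [v s']; unfold pickU in Ht.
        destruct (Rlt_dec u v); [exact Ht|]. destruct (Rlt_dec v u).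
        { simpl in *. destruct s, s'; simpl in *; lra. }
        destruct s; [exact Ht|]. simpl in *. destruct s'; simpl in *; lra.
      * apply Hd; auto.
        destruct c as [u s], d as [v s']; unfold pickU in Ht.
        destruct (Rlt_dec u v). { simpl in *. destruct s, s'; simpl in *; lra. }
        destruct (Rlt_dec v u); [exact Ht|].
        destruct s; [|exact Ht]. simpl in *. destruct s'; simpl in *; lra.
  - subst. split; [left; auto|]. intros t Ht c0 [<-|[]]; auto.
Qed.

Lemma bestL_spec l : match bestL l with
  | None => l = nil
  | Some b => In b l /\ forall t, Rsat (snd b) (fst b) t -> forall c, In c l -> Rsat (snd c) (fst c) t end.
Proof. induction l as [|c l IH]; simpl; [reflexivity|].
  destruct (bestL l) as [d|].
  - destruct IH as [Hin Hd]. split.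
    + destruct c as [u s], d as [v s']; unfold pickL.
      destruct (Rlt_dec v u); [left; auto|]. destruct (Rlt_dec u v); [right; auto|].
      destruct s; [left|right]; auto.
    + intros t Ht c0 [<-|Hc0].
      * destruct c as [u s], d as [v s']; unfold pickL in Ht.
        destruct (Rlt_dec v u); [exact Ht|]. destruct (Rlt_dec u v).
        { simpl in *. destruct s, s'; simpl in *; lra. }
        destruct s; [exact Ht|]. simpl in *. destruct s'; simpl in *; lra.
      * apply Hd; auto.
        destruct c as [u s], d as [v s']; unfold pickL in Ht.
        destruct (Rlt_dec v u). { simpl in *. destruct s, s'; simpl in *; lra. }
        destruct (Rlt_dec u v); [exact Ht|].
        destruct s; [|exact Ht]. simpl in *. destruct s'; simpl in *; lra.
  - subst. split; [left; auto|]. intros t Ht c0 [<-|[]]; auto.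
Qed.

Lemma interval (Us Ls : list (R * bool)) :
  (forall u l, In u Us -> In l Ls -> Rsat (snd u || snd l) (fst l) (fst u)) ->
  exists t, (forall u, In u Us -> Rsat (snd u) t (fst u)) /\
            (forall l, In l Ls -> Rsat (snd l) (fst l) t).
Proof. intros H. pose proof (bestU_spec Us) as HU. pose proof (bestL_spec Ls) as HL.
  destruct (bestU Us) as [[u su]|]; destruct (bestL Ls) as [[l sl]|].
  - destruct HU as [HuI HU], HL as [HlI HL]. pose proof (H _ _ HuI HlI) as C. simpl in C.
    destruct (Rlt_dec l u).
    + exists ((l+u)/2). split; [apply HU|apply HL]; simpl; apply Rsat_lt; lra.
    + exists l. destruct su, sl; simpl in C; try lra.
      split; [apply HU|apply HL]; simpl; lra.
  - subst. exists (u - 1). split; [apply HU; simpl; apply Rsat_lt; lra|intros ? []].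
  - subst. exists (l + 1). split; [intros ? []|apply HL; simpl; apply Rsat_lt; lra].
  - subst. exists 0. split; intros ? [].
Qed.
Record cons := Cons { ca : nat -> Q; cg : nat -> Q; cr : Q; cs : bool }.

Section FM.
Variables p q : nat.

Definition val (c : cons) (x y : vec) : R :=
  dot p (fun j => Q2R (ca c j)) x + dot q (fun j => Q2R (cg c j)) y.
Definition csat (c : cons) (x y : vec) : Prop := Rsat (cs c) (val c x y) (Q2R (cr c)).
Definition allsat (l : list cons) x y := forall c, In c l -> csat c x y.

Definition comb (j : nat) (c1 c2 : cons) : cons :=
  Cons (fun i => Qopp (cg c2 j) * ca c1 i + cg c1 j * ca c2 i)%Q
       (fun i => Qopp (cg c2 j) * cg c1 i + cg c1 j * cg c2 i)%Q
       (Qopp (cg c2 j) * cr c1 + cg c1 j * cr c2)%Q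
       (cs c1 || cs c2).

Lemma val_comb j c1 c2 x y :
  val (comb j c1 c2) x y = - Q2R (cg c2 j) * val c1 x y + Q2R (cg c1 j) * val c2 x y.
Proof. unfold val, comb; simpl.
  rewrite (dot_ext p _ (fun i => - Q2R (cg c2 j) * Q2R (ca c1 i) + Q2R (cg c1 j) * Q2R (ca c2 i)))
    by (intros; rewrite Q2R_plus, !Q2R_mult, Q2R_opp; ring).
  rewrite (dot_ext q _ (fun i => - Q2R (cg c2 j) * Q2R (cg c1 i) + Q2R (cg c1 j) * Q2R (cg c2 i)))
    by (intros; rewrite Q2R_plus, !Q2R_mult, Q2R_opp; ring).
  rewrite !dot_lin. ring. Qed.

Lemma cr_comb j c1 c2 : Q2R (cr (comb j c1 c2)) = - Q2R (cg c2 j) * Q2R (cr c1) + Q2R (cg c1 j) * Q2R (cr c2).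
Proof. simpl. rewrite Q2R_plus, !Q2R_mult, Q2R_opp. ring. Qed.

Definition qpos j c := negb (Qle_bool (cg c j) 0).
Definition qneg j c := negb (Qle_bool 0 (cg c j)).
Definition qzero j c := Qeq_bool (cg c j) 0.

Lemma qpos_R j c : qpos j c = true -> 0 < Q2R (cg c j).
Proof. unfold qpos. destruct (Qle_bool (cg c j) 0) eqn:E; simpl; [discriminate|].
  intros _. replace 0 with (Q2R 0) by (unfold Q2R; simpl; field). apply Qlt_Rlt, Qnot_le_lt.
  intros H. apply Qle_bool_iff in H. congruence. Qed.
Lemma qneg_R j c : qneg j c = true -> Q2R (cg c j) < 0.
Proof. unfold qneg. destruct (Qle_bool 0 (cg c j)) eqn:E; simpl; [discriminate|].
  intros _. replace 0 with (Q2R 0) by (unfold Q2R; simpl; field). apply Qlt_Rlt, Qnot_le_lt.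
  intros H. apply Qle_bool_iff in H. congruence. Qed.
Lemma qzero_R j c : qzero j c = true -> Q2R (cg c j) = 0.
Proof. unfold qzero. intros H. apply Qeq_bool_iff, Qeq_eqR in H. rewrite H. unfold Q2R; simpl; field. Qed.
Lemma Q2R0 : Q2R 0 = 0. Proof. unfold Q2R; simpl; field. Qed.
Lemma tri j c : (qzero j c = true /\ Q2R (cg c j) = 0) \/ (qpos j c = true /\ 0 < Q2R (cg c j))
   \/ (qneg j c = true /\ Q2R (cg c j) < 0).
Proof. destruct (total_order_T (Q2R (cg c j)) 0) as [[H|H]|H].
  - right; right. split; auto. unfold qneg. destruct (Qle_bool 0 (cg c j)) eqn:E; auto.
    apply Qle_bool_iff, Qle_Rle in E. rewrite Q2R0 in E. lra.
  - left. split; auto. unfold qzero. apply Qeq_bool_iff, eqR_Qeq. rewrite Q2R0; auto.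
  - right; left. split; auto. unfold qpos. destruct (Qle_bool (cg c j) 0) eqn:E; auto.
    apply Qle_bool_iff, Qle_Rle in E. rewrite Q2R0 in E. lra. Qed.

Definition elim (j : nat) (l : list cons) : list cons :=
  filter (qzero j) l ++ flat_map (fun c1 => map (comb j c1) (filter (qneg j) l)) (filter (qpos j) l).

Lemma in_elim j l c : In c (elim j l) ->
  (In c l /\ qzero j c = true) \/
  exists c1 c2, c = comb j c1 c2 /\ In c1 l /\ qpos j c1 = true /\ In c2 l /\ qneg j c2 = true.
Proof. unfold elim. rewrite in_app_iff, filter_In, in_flat_map. intros [H|[c1 [H1 H2]]]; [left; auto|].
  right. apply filter_In in H1. apply in_map_iff in H2. destruct H2 as [c2 [<- H2]].
  apply filter_In in H2. exists c1, c2. intuition. Qed.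

Lemma comb_in_elim j l c1 c2 : In c1 l -> qpos j c1 = true -> In c2 l -> qneg j c2 = true ->
  In (comb j c1 c2) (elim j l).
Proof. intros. unfold elim. apply in_app_iff. right. apply in_flat_map. exists c1.
  split; [apply filter_In; auto|]. apply in_map. apply filter_In; auto. Qed.

Lemma elim_sound j l x y : allsat l x y -> allsat (elim j l) x y.
Proof. intros H c Hc. destruct (in_elim _ _ _ Hc) as [[Hc1 _]|[c1 [c2 [-> [H1 [P1 [H2 P2]]]]]]].
  - apply H; auto.
  - apply qpos_R in P1. apply qneg_R in P2. pose proof (H _ H1) as S1. pose proof (H _ H2) as S2.
    unfold csat in *. rewrite val_comb, cr_comb. simpl.
    destruct (cs c1), (cs c2); simpl in *; nra. Qed.

Lemma elim_zero j l c : In c (elim j l) -> Q2R (cg c j) = 0.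
Proof. intros Hc. destruct (in_elim _ _ _ Hc) as [[_ Z]|[c1 [c2 [-> _]]]].
  - apply qzero_R; auto.
  - simpl. rewrite Q2R_plus, !Q2R_mult, Q2R_opp. ring. Qed.

Lemma elim_zero_pres j j' l : (forall c, In c l -> Q2R (cg c j') = 0) ->
  forall c, In c (elim j l) -> Q2R (cg c j') = 0.
Proof. intros H c Hc. destruct (in_elim _ _ _ Hc) as [[Hc1 _]|[c1 [c2 [-> [H1 [_ [H2 _]]]]]]].
  - auto.
  - simpl. rewrite Q2R_plus, !Q2R_mult, Q2R_opp, (H c1), (H c2) by auto. ring. Qed.

Lemma compat_real s G1 G2 S1 S2 r1 r2 y : 0 < G1 -> G2 < 0 ->
  Rsat s (-G2*(S1+G1*y) + G1*(S2+G2*y)) (-G2*r1 + G1*r2) ->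
  Rsat s ((r2-S2)/G2) ((r1-S1)/G1).
Proof. intros H1 H2 H. set (u := (r1-S1)/G1). set (l := (r2-S2)/G2).
  assert (E1 : S1 = r1 - u*G1) by (unfold u; field; lra).
  assert (E2 : S2 = r2 - l*G2) by (unfold l; field; lra).
  rewrite E1, E2 in H. clearbody u l.
  assert (G1*G2 < 0) by nra.
  destruct s; simpl in *; nra. Qed.

Lemma elim_complete j l x y : (j < q)%nat -> allsat (elim j l) x y ->
  exists t, allsat l x (upd y j t).
Proof. intros Hj H.
  set (S c := val c x y - Q2R (cg c j) * y j).
  set (Us := map (fun c => ((Q2R (cr c) - S c) / Q2R (cg c j), cs c)) (filter (qpos j) l)).
  set (Ls := map (fun c => ((Q2R (cr c) - S c) / Q2R (cg c j), cs c)) (filter (qneg j) l)).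
  destruct (interval Us Ls) as [t [HU HL]].
  { intros u v Hu Hv. unfold Us, Ls in *. apply in_map_iff in Hu, Hv.
    destruct Hu as [c1 [<- Hc1]], Hv as [c2 [<- Hc2]]. apply filter_In in Hc1, Hc2.
    destruct Hc1 as [Hc1 P1], Hc2 as [Hc2 P2].
    pose proof (H _ (comb_in_elim _ _ _ _ Hc1 P1 Hc2 P2)) as C. unfold csat in C.
    rewrite val_comb, cr_comb in C. simpl in C |- *.
    apply compat_real with (y := y j); [apply qpos_R; auto|apply qneg_R; auto|].
    unfold S. replace (val c1 x y - Q2R (cg c1 j) * y j + Q2R (cg c1 j) * y j) with (val c1 x y) by ring.
    replace (val c2 x y - Q2R (cg c2 j) * y j + Q2R (cg c2 j) * y j) with (val c2 x y) by ring.
    exact C. }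
  exists t. intros c Hc.
  assert (V : val c x (upd y j t) = S c + Q2R (cg c j) * t).
  { unfold S, val. rewrite dot_upd by auto. ring. }
  unfold csat. rewrite V.
  destruct (tri j c) as [[Z G0]|[[P G0]|[N G0]]].
  - assert (csat c x y) as C.
    { apply H. unfold elim. apply in_app_iff. left. apply filter_In; auto. }
    unfold csat in C. unfold S. rewrite G0. replace (val c x y - 0 * y j + 0 * t) with (val c x y) by ring. exact C.
  - assert (In ((Q2R (cr c) - S c) / Q2R (cg c j), cs c) Us) as Hu.
    { unfold Us. apply in_map_iff. exists c. split; auto. apply filter_In; auto. }
    pose proof (HU _ Hu) as K. simpl in K.
    set (u := (Q2R (cr c) - S c) / Q2R (cg c j)) in K.
    assert (Q2R (cr c) = S c + Q2R (cg c j) * u) as E by (unfold u; field; lra).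
    rewrite E. clearbody u. destruct (cs c); simpl in *; nra.
  - assert (In ((Q2R (cr c) - S c) / Q2R (cg c j), cs c) Ls) as Hu.
    { unfold Ls. apply in_map_iff. exists c. split; auto. apply filter_In; auto. }
    pose proof (HL _ Hu) as K. simpl in K.
    set (u := (Q2R (cr c) - S c) / Q2R (cg c j)) in K.
    assert (Q2R (cr c) = S c + Q2R (cg c j) * u) as E by (unfold u; field; lra).
    rewrite E. clearbody u. destruct (cs c); simpl in *; nra.
Qed.

Fixpoint elimall (js : list nat) (l : list cons) : list cons :=
  match js with nil => l | j :: js' => elim j (elimall js' l) end.

Lemma elimall_sound js l x y : allsat l x y -> allsat (elimall js l) x y.
Proof. induction js; simpl; auto. intros; apply elim_sound; auto. Qed.

Lemma elimall_complete js l x y : (forall j, In j js -> (j < q)%nat) ->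
  allsat (elimall js l) x y -> exists y', allsat l x y'.
Proof. revert y; induction js; simpl; intros y Hjs H; [eauto|].
  destruct (elim_complete a (elimall js l) x y) as [t Ht]; auto.
  apply (IHjs (upd y a t)); auto. Qed.

Lemma elimall_zero js l : forall c, In c (elimall js l) -> forall j, In j js -> Q2R (cg c j) = 0.
Proof. induction js; simpl; intros c Hc j Hj; [contradiction|].
  destruct Hj as [<-|Hj].
  - eapply elim_zero; eauto.
  - eapply (elim_zero_pres a j); eauto. Qed.

End FM.

Fixpoint prodden (n : nat) (a : nat -> Q) : Z :=
  match n with O => 1%Z | S n' => (prodden n' a * Zpos (Qden (a n')))%Z end.

Lemma prodden_div n a j : (j < n)%nat -> (Zpos (Qden (a j)) | prodden n a)%Z.
Proof. induction n; simpl; intros H; [lia|].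
  destruct (Nat.eq_dec j n) as [->|].
  - apply Z.divide_factor_r.
  - apply Z.divide_mul_l. apply IHn. lia. Qed.

Lemma prodden_pos n a : (0 < prodden n a)%Z.
Proof. induction n; simpl; lia. Qed.

Definition dZ (a : nat -> Q) (N : Z) (j : nat) : Z := (Qnum (a j) * (N / Zpos (Qden (a j))))%Z.

Lemma dZ_R a N j : (Zpos (Qden (a j)) | N)%Z -> IZR (dZ a N j) = IZR N * Q2R (a j).
Proof. intros [k Hk]. unfold dZ. rewrite Hk, Z.div_mul by lia.
  unfold Q2R. rewrite !mult_IZR. field. apply not_0_IZR. lia. Qed.

Lemma dot_int p (d : nat -> Z) x : int_vec p x -> exists z, dot p (fun j => IZR (d j)) x = IZR z.
Proof. induction p; simpl; intros H; [exists 0%Z; reflexivity|].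
  destruct IHp as [z Hz]. { intros j Hj; apply H; lia. }
  destruct (H p) as [w Hw]; [lia|]. exists (z + d p * w)%Z.
  rewrite Hz, Hw, plus_IZR, mult_IZR. reflexivity. Qed.

Definition EE (s : bool) (rho : R) : Z := if s then (1 - up (- rho))%Z else up rho.

Lemma EE_sat s w rho : Rsat s w rho -> w < IZR (EE s rho).
Proof. unfold EE, Rsat; destruct s; intros H.
  - destruct (archimed (- rho)). rewrite minus_IZR. simpl (IZR 1). lra.
  - destruct (archimed rho). lra. Qed.

Lemma EE_unsat s z rho : ~ Rsat s (IZR z) rho -> IZR (EE s rho) <= IZR z.
Proof. intros H. apply IZR_le.
  assert (IZR (EE s rho) < IZR (z + 1)) as K.
  { rewrite plus_IZR. unfold EE, Rsat in *; destruct s.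
    - destruct (archimed (- rho)). rewrite minus_IZR. simpl (IZR 1). lra.
    - destruct (archimed rho). lra. }
  apply lt_IZR in K. lia. Qed.

Lemma Rsat_scale s N w r : 0 < N -> Rsat s w r <-> Rsat s (N * w) (N * r).
Proof. intros HN. destruct s; simpl; split; intros; nra. Qed.

Section Main.
Variables (m p q : nat) (A G : nat -> nat -> Q) (b : nat -> Q) (alpha beta : nat -> Q) (gamma : Q).

Definition rowc (i : nat) : cons := Cons (A i) (G i) (b i) false.
Definition cutc : cons := Cons (fun j => Qopp (alpha j)) (fun j => Qopp (beta j)) (Qopp gamma) true.
Definition init : list cons := map rowc (seq 0 m) ++ (cutc :: nil).

Lemma init_sat x y : allsat p q init x y <->
  polyhedron m p q A G b (x, y) /\
  dot p (fun j => Q2R (alpha j)) x + dot q (fun j => Q2R (beta j)) y > Q2R gamma.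
Proof. split.
  - intros H. split.
    + intros i Hi. assert (In (rowc i) init) as Hin.
      { unfold init. apply in_app_iff. left. apply in_map. apply in_seq. lia. }
      apply H in Hin. exact Hin.
    + assert (In cutc init) as Hin by (unfold init; apply in_app_iff; right; left; auto).
      apply H in Hin. unfold csat, val, Rsat in Hin. simpl in Hin.
      rewrite (dot_ext p _ (fun j => - Q2R (alpha j))) in Hin by (intros; apply Q2R_opp).
      rewrite (dot_ext q _ (fun j => - Q2R (beta j))) in Hin by (intros; apply Q2R_opp).
      rewrite !dot_opp, Q2R_opp in Hin. simpl. lra.
  - intros [HP Hc] c Hin. unfold init in Hin. apply in_app_iff in Hin.
    destruct Hin as [Hin|[<-|[]]].
    + apply in_map_iff in Hin. destruct Hin as [i [<- Hi]]. apply in_seq in Hi.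
      apply (HP i). lia.
    + unfold csat, val, Rsat. simpl.
      rewrite (dot_ext p _ (fun j => - Q2R (alpha j))) by (intros; apply Q2R_opp).
      rewrite (dot_ext q _ (fun j => - Q2R (beta j))) by (intros; apply Q2R_opp).
      rewrite !dot_opp, Q2R_opp. simpl in Hc. lra.
Qed.

Definition F := elimall (seq 0 q) init.

Lemma F_val c x y : In c F -> val p q c x y = dot p (fun j => Q2R (ca c j)) x.
Proof. intros Hc. unfold val. rewrite (dot_zero q). { ring. }
  intros j Hj. apply (elimall_zero (seq 0 q) init c Hc). apply in_seq. lia. Qed.

Definition NN (c : cons) : Z := prodden p (ca c).
Definition dd (c : cons) (j : nat) : Z := (- dZ (ca c) (NN c) j)%Z.
Definition de (c : cons) : Z := (- EE (cs c) (IZR (NN c) * Q2R (cr c)))%Z.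

Lemma dd_dot c x : dot p (fun j => IZR (dd c j)) x = - (IZR (NN c) * dot p (fun j => Q2R (ca c j)) x).
Proof. rewrite (dot_ext p _ (fun j => - (IZR (NN c) * Q2R (ca c j)))).
  - rewrite dot_opp, dot_scal. reflexivity.
  - intros j Hj. unfold dd. rewrite opp_IZR, dZ_R; [reflexivity|]. apply prodden_div; auto. Qed.

Lemma dd_i c x y : In c F -> csat p q c x y -> dot p (fun j => IZR (dd c j)) x > IZR (de c).
Proof. intros Hc H. unfold csat in H. rewrite F_val in H by auto.
  rewrite dd_dot. unfold de. rewrite opp_IZR.
  pose proof (prodden_pos p (ca c)) as Hp. apply IZR_lt in Hp.
  apply (Rsat_scale _ (IZR (NN c))) in H; [|exact Hp].
  apply EE_sat in H. lra. Qed.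

Lemma dd_ii c x y : In c F -> int_vec p x -> ~ csat p q c x y -> dot p (fun j => IZR (dd c j)) x <= IZR (de c).
Proof. intros Hc Hx H. unfold csat in H. rewrite F_val in H by auto.
  pose proof (prodden_pos p (ca c)) as Hp. apply IZR_lt in Hp.
  destruct (dot_int p (dZ (ca c) (NN c)) x Hx) as [z Hz].
  assert (Hz' : IZR z = IZR (NN c) * dot p (fun j => Q2R (ca c j)) x).
  { rewrite <- Hz, <- dot_scal. apply dot_ext. intros. apply dZ_R. apply prodden_div; auto. }
  assert (~ Rsat (cs c) (IZR z) (IZR (NN c) * Q2R (cr c))) as K.
  { rewrite Hz'. intros K. apply H. apply (Rsat_scale _ (IZR (NN c))); auto. }
  apply EE_unsat in K. rewrite dd_dot. unfold de. rewrite opp_IZR. fold (NN c) in K. lra. Qed.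

End Main.

Theorem lemma2p5 (m p q : nat) (A G : nat -> nat -> Q) (b : nat -> Q)
    (alpha beta : nat -> Q) (gamma : Q) :
  valid p q alpha beta gamma (mixed_int_hull p q (polyhedron m p q A G b)) ->
  ~ valid p q alpha beta gamma (polyhedron m p q A G b) ->
  exists k : nat, (2 <= k)%nat /\
    k_disjunctive_cut p q k alpha beta gamma (polyhedron m p q A G b).
Proof.
  intros HI HnP.
  set (Fl := F m q A G b alpha beta gamma).
  assert (KEY : forall x y, int_vec p x -> allsat p q Fl x y -> False).
  { intros x y Hx HF.
    destruct (elimall_complete p q (seq 0 q) (init m A G b alpha beta gamma) x y) as [y' Hy'].
    { intros j Hj. apply in_seq in Hj. lia. }
    { exact HF. }
    apply init_sat in Hy'. destruct Hy' as [HP Hc].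
    assert (mixed_int_hull p q (polyhedron m p q A G b) (x, y')) as HM.
    { exists ((1, (x, y')) :: nil). split; [|split; [|split]].
      - constructor; [|constructor]. simpl. split; [lra|]. split; auto.
      - unfold wsum_w; simpl; ring.
      - intros j Hj. unfold wsum_x; simpl; ring.
      - intros j Hj. unfold wsum_y; simpl; ring. }
    apply HI in HM. simpl in HM. lra. }
  destruct Fl as [|c0 Fr] eqn:EF.
  - exfalso. apply (KEY (fun _ => 0) (fun _ => 0)).
    + intros j _. exists 0%Z. reflexivity.
    + intros c [].
  - assert (Hnth : forall i, In (nth i Fl c0) Fl).
    { intros i. destruct (nth_in_or_default i Fl c0) as [H|H]; [exact H|].
      rewrite H, EF. left; auto. }
    exists (S (length Fl)). split; [rewrite EF; simpl; lia|].
    split; [exact HnP|].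
    exists (fun i => dd p (nth i Fl c0)), (fun i => de p (nth i Fl c0)).
    split.
    + split; [rewrite EF; simpl; lia|].
      intros x Hx.
      destruct (classic (allsat p q Fl x (fun _ => 0))) as [Hall|Hn].
      { exfalso. rewrite EF in Hall. exact (KEY _ _ Hx Hall). }
      apply not_all_ex_not in Hn. destruct Hn as [c Hn].
      apply imply_to_and in Hn. destruct Hn as [Hc Hn].
      destruct (In_nth Fl c c0 Hc) as [i [Hi Hi']].
      exists i. split; [lia|]. rewrite Hi'.
      apply (dd_ii m p q A G b alpha beta gamma c x (fun _ => 0)); auto.
    + intros [x y] HP Hv i Hi.
      apply (dd_i m p q A G b alpha beta gamma _ x y); [apply Hnth|].
      assert (allsat p q (init m A G b alpha beta gamma) x y) as H0 by (apply init_sat; auto).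
      apply (elimall_sound p q (seq 0 q)) in H0. apply H0. apply Hnth.
Qed.
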